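(* Let $K$ be an algebraically closed field of characteristic $p\geq 0$, $n\geq 2$, $Y=\operatorname{Spin}_{2n+2}(K)$ with maximal torus $T_Y$, Borel subgroup $B_Y\supseteq T_Y$, simple roots $\alpha_1,\ldots,\alpha_{n+1}$ and fundamental weights $\lambda_1,\ldots,\lambda_{n+1}$ (Bourbaki ordering), and Chevalley basis $\{f_\alpha,h_r,e_\alpha\}$ of $\operatorname{Lie}(Y)$ compatible with $T_Y\subseteq B_Y$. Let $X\subset Y$ be the subgroup of type $B_n$ stabilizing a non-singular $1$-space of the natural module, with $T_X\subseteq T_Y$, $B_X\subseteq B_Y$, and with $\operatorname{Lie}(X)$ the subalgebra of $\operatorname{Lie}(Y)$ generated by $e_{\alpha_r},f_{\alpha_r}$ $(1\leq r\leq n-1)$, $e_{\alpha_n}+e_{\alpha_{n+1}}$ and $f_{\alpha_n}+f_{\alpha_{n+1}}$. Let $V=L_Y(\lambda)$ with $\lambda=\sum_{r=1}^{n+1}a_r\lambda_r$ a non-zero $p$-restricted dominant weight satisfying $a_n\neq 0=a_{n+1}$, and let $v^+$ be a maximal vector of weight $\lambda$ for $B_Y$. Assume that $f_\gamma v^+\in\operatorname{Lie}(X)v^+$ for every positive root $\gamma$ of $Y$. Then $f_\gamma f_{\eta_1}\cdots f_{\eta_s}v^+\in\operatorname{Lie}(X)v^+$ for every positive root $\gamma$ of $Y$, every $s\geq 1$ and all positive roots $\eta_1,\ldots,\eta_s$ of $X$ (with respect to $T_X\subseteq B_X$).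
   Context: For a positive root $\eta$ of $X$, $f_\eta$ denotes a non-zero root vector of $\operatorname{Lie}(X)$ of $T_X$-weight $-\eta$. $\operatorname{Lie}(X)v^+$ denotes the $\operatorname{Lie}(X)$-submodule of $V$ generated by $v^+$. $p$-restricted means $0\leq a_r\leq p-1$ for all $r$ if $p>0$. *)

(* Defs.v *)
From HB Require Import structures.
From mathcomp Require Import all_boot all_order all_algebra.
Set Implicit Arguments. Unset Strict Implicit. Unset Printing Implicit Defensive.
Import GRing.Theory.
Local Open Scope ring_scope.

Definition subspaceP (K : pzRingType) (V : lmodType K) (W : V -> Prop) : Prop :=
  [/\ W 0, (forall u w, W u -> W w -> W (u + w)) & (forall (k : K) u, W u -> W (k *: u))].

Section ChevalleyD.
Variable n : nat.
Local Notation m := n.+1.   (* Y = Spin_{2m}, rank m = n+1 *)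

(* raw root data (i,j,s), i<j (0-based): s = false : eps_i - eps_j ;
   s = true : eps_i + eps_j *)
Definition rawroot := ('I_m * 'I_m * bool)%type.
Definition PRY := {t : rawroot | (t.1.1 < t.1.2)%N}.
(* index set of the Chevalley basis : e_gamma, f_gamma (gamma > 0), h_r *)
Definition BY := (PRY + PRY + 'I_m)%type.

(* natural module K^{2m} with basis e_1..e_m, e_{-1}..e_{-m} and quadratic form
   sum x_i x_{-i} *)
Definition posi (i : 'I_m) : 'I_(m + m) := lshift m i.
Definition negi (i : 'I_m) : 'I_(m + m) := rshift m i.

Definition emat (t : rawroot) : 'M[int]_(m + m) :=
  let: (i, j, s) := t in
  if s then delta_mx (posi i) (negi j) - delta_mx (posi j) (negi i)
  else delta_mx (posi i) (posi j) - delta_mx (negi j) (negi i).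
Definition fmat (t : rawroot) : 'M[int]_(m + m) :=
  let: (i, j, s) := t in
  if s then delta_mx (negi j) (posi i) - delta_mx (negi i) (posi j)
  else delta_mx (posi j) (posi i) - delta_mx (negi i) (negi j).

(* simple roots (Bourbaki): alpha_{r+1} = eps_r - eps_{r+1} (0-based r < n),
   alpha_{n+1} = eps_{n-1} + eps_n (0-based) *)
Definition simpleY (r : 'I_m) : rawroot :=
  if (r < n)%N then (r, inord r.+1, false) else (inord n.-1, inord n, true).

Definition commx (A B : 'M[int]_(m + m)) := A *m B - B *m A.
Definition hmat (r : 'I_m) : 'M[int]_(m + m) :=
  commx (emat (simpleY r)) (fmat (simpleY r)).

Definition matB (b : BY) : 'M[int]_(m + m) :=
  match b with
  | inl (inl g) => emat (val g)
  | inl (inr g) => fmat (val g)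
  | inr r => hmat r
  end.

(* coordinates in the Chevalley basis of an integer matrix of so_{2m}
   lying in the Z-span of the basis *)
Definition coordB (M : 'M[int]_(m + m)) (b : BY) : int :=
  match b with
  | inl (inl g) => let: (i, j, s) := val g in
      if s then M (posi i) (negi j) else M (posi i) (posi j)
  | inl (inr g) => let: (i, j, s) := val g in
      if s then M (negi j) (posi i) else M (posi j) (posi i)
  | inr r =>
      if (r.+1 < n)%N then \sum_(k < m | (k <= r)%N) M (posi k) (posi k)
      else
        let S := \sum_(k < m | (k < n)%N) M (posi k) (posi k) in
        if (r < n)%N then ((S - M (posi ord_max) (posi ord_max)) %/ 2)%Z
        else ((S + M (posi ord_max) (posi ord_max)) %/ 2)%Z
  end.

Definition structY (x y z : BY) : int := coordB (commx (matB x) (matB y)) z.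

(* Lie(Y) over K : coordinates w.r.t. the Chevalley basis *)
Definition LY (K : pzRingType) := {ffun BY -> K}.

Definition bracketY (K : pzRingType) (x y : LY K) : LY K :=
  [ffun z => \sum_a \sum_b x a * y b * (structY a b z)%:~R].

Definition eY (K : pzRingType) (t : rawroot) : LY K :=
  [ffun b => match b with inl (inl g) => (val g == t)%:R | _ => 0 end].
Definition fY (K : pzRingType) (t : rawroot) : LY K :=
  [ffun b => match b with inl (inr g) => (val g == t)%:R | _ => 0 end].

Definition genX (K : pzRingType) (g : LY K) : Prop :=
  (exists k : nat, (k.+1 < n)%N /\
     (g = eY K (inord k, inord k.+1, false) \/ g = fY K (inord k, inord k.+1, false)))
  \/ g = eY K (inord n.-1, inord n, false) + eY K (inord n.-1, inord n, true)
  \/ g = fY K (inord n.-1, inord n, false) + fY K (inord n.-1, inord n, true).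

Definition subspaceLY (K : pzRingType) (S : LY K -> Prop) : Prop :=
  [/\ S 0, (forall u w, S u -> S w -> S (u + w))
     & (forall (k : K) u, S u -> S [ffun b => k * u b])].

Definition LieX (K : pzRingType) (x : LY K) : Prop :=
  forall S : LY K -> Prop, subspaceLY S -> (forall g, genX g -> S g) ->
    (forall y z, S y -> S z -> S (bracketY y z)) -> S x.

(* weights (eps-coordinates) *)
Definition wtY (g : PRY) : {ffun 'I_m -> int} :=
  let: (i, j, s) := val g in
  [ffun k => ((k == i) : nat)%:Z + (if s then 1 else -1) * ((k == j) : nat)%:Z].
Definition wtB (b : BY) : {ffun 'I_m -> int} :=
  match b with inl (inl g) => wtY g | inl (inr g) => - wtY g | inr _ => 0 end.
(* restriction of characters from T_Y to T_X (T_X kills eps_{n+1}) *)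
Definition resX (w : {ffun 'I_m -> int}) : {ffun 'I_n -> int} :=
  [ffun k => w (widen_ord (leqnSn n) k)].

(* positive roots of X = B_n : eps_i -+ eps_j (i<j), eps_i *)
Definition PRX := ({t : 'I_n * 'I_n * bool | (t.1.1 < t.1.2)%N} + 'I_n)%type.
Definition wtX (e : PRX) : {ffun 'I_n -> int} :=
  match e with
  | inl g => let: (i, j, s) := val g in
      [ffun k => ((k == i) : nat)%:Z + (if s then 1 else -1) * ((k == j) : nat)%:Z]
  | inr i => [ffun k => ((k == i) : nat)%:Z]
  end.

Definition hasTXweight (K : pzRingType) (x : LY K) (mu : {ffun 'I_n -> int}) : Prop :=
  forall b, x b != 0 -> resX (wtB b) = mu.

Definition rootvecX (K : pzRingType) (x : LY K) (eta : PRX) : Prop :=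
  [/\ LieX x, x != 0 & hasTXweight x (- wtX eta)].

Section Rep.
Variables (K : fieldType) (V : lmodType K) (rho : BY -> {linear V -> V}).

Definition act (x : LY K) (v : V) : V := \sum_b x b *: rho b v.

Definition is_rep : Prop :=
  forall (x y : LY K) (v : V),
    act (bracketY x y) v = act x (act y v) - act y (act x v).

Definition restricted_rep : Prop :=
  forall p, p \in [pchar K] -> forall v : V,
    (forall g, iter p (rho (inl (inl g))) v = 0 /\ iter p (rho (inl (inr g))) v = 0)
    /\ (forall r, iter p (rho (inr r)) v = rho (inr r) v).

Definition irreducible_rep : Prop :=
  forall W : V -> Prop, subspaceP W -> (forall b w, W w -> W (rho b w)) ->
    (exists w, W w /\ w != 0) -> forall v, W v.

Definition LXv (vp v : V) : Prop :=
  forall W : V -> Prop, subspaceP W -> W vp ->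
    (forall x w, LieX x -> W w -> W (act x w)) -> W v.
End Rep.

End ChevalleyD.

(* Main.v *)
Require Import Defs.
From HB Require Import structures.
From mathcomp Require Import all_boot all_order all_algebra zify.
Set Implicit Arguments. Unset Strict Implicit. Unset Printing Implicit Defensive.
Import GRing.Theory.
Local Open Scope ring_scope.

Section H.
Variable n : nat.
Local Notation m := n.+1.

Definition phi (k : 'I_(m + m)) : nat := if (k < m)%N then val k else (m + m + m - val k)%N.
Definition lowerT (M : 'M[int]_(m + m)) := forall r c, (phi r <= phi c)%N -> M r c = 0.

Lemma delta_low (a b r c : 'I_(m+m)) : (phi b < phi a)%N -> (phi r <= phi c)%N ->
  (delta_mx a b : 'M[int]_(m+m)) r c = 0.
Proof.
move=> hab hrc; rewrite mxE.
do 2 case: eqP => [?|] //=; subst; lia.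
Qed.

Lemma eqand_low (a b r c : 'I_(m+m)) : (phi b < phi a)%N -> (phi r <= phi c)%N ->
  ((r == a) && (c == b)) = false.
Proof. move=> hab hrc; do 2 case: eqP => [?|] //=; subst; lia. Qed.

Lemma phi_pos (i : 'I_m) : phi (posi i) = i.
Proof. by rewrite /phi /= ltn_ord. Qed.
Lemma phi_neg (i : 'I_m) : phi (negi i) = (m + m - i)%N.
Proof. rewrite /phi /=. have := ltn_ord i. case: ifP; lia. Qed.

Lemma fmat_low (g : PRY n) : lowerT (fmat (val g)).
Proof.
case: g => [[[i j] s]] /= hij r c hrc.
case: s; rewrite /= !mxE.
- rewrite !eqand_low ?subr0 //; rewrite ?phi_pos ?phi_neg; have := ltn_ord i; have := ltn_ord j; lia.
- rewrite (eqand_low (a:=posi j) (b:=posi i)) ?(eqand_low (a:=negi i) (b:=negi j)) ?subr0 //;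
  rewrite ?phi_pos ?phi_neg; have := ltn_ord i; have := ltn_ord j; lia.
Qed.

Lemma mul_low (A B : 'M[int]_(m+m)) : lowerT A -> lowerT B -> lowerT (A *m B).
Proof.
move=> hA hB r c hrc; rewrite mxE; apply: big1 => k _.
case: (leqP (phi r) (phi k)) => h; first by rewrite hA ?mul0r.
by rewrite hB ?mulr0 //; lia.
Qed.

Lemma commx_low (A B : 'M[int]_(m+m)) : lowerT A -> lowerT B -> lowerT (commx A B).
Proof.
move=> hA hB r c hrc; have := mul_low hA hB hrc; have := mul_low hB hA hrc.
by rewrite /commx !mxE => -> ->; rewrite subr0.
Qed.

Definition isF (b : BY n) : bool := if b is inl (inr _) then true else false.

Lemma coordB_low (M : 'M[int]_(m+m)) z : lowerT M -> ~~ isF z -> coordB M z = 0.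
Proof.
move=> hM; case: z => [[g|g]|r] //= _.
- case: g => [[[i j] s]] /= hij; case: s; rewrite hM // ?phi_pos ?phi_neg;
  have := ltn_ord i; have := ltn_ord j; lia.
- have H0 : forall P, \sum_(k < m | P k) M (posi k) (posi k) = 0.
    by move=> P; apply: big1 => k _; rewrite hM.
  rewrite !H0 hM; last by rewrite phi_pos.
  by case: ifP => _ //; case: ifP.
Qed.

Lemma structFF g1 g2 z : ~~ isF z -> structY (inl (inr g1)) (inl (inr g2)) z = 0.
Proof.
move=> hz; rewrite /structY /=; apply: coordB_low => //.
by apply: commx_low; apply: fmat_low.
Qed.


Lemma wt_nonF (b : BY n) (eta : PRX n) : ~~ isF b -> resX (wtB b) <> - wtX eta.
Proof.
move=> hb E.
have Ek : forall k, resX (wtB b) k = (- wtX eta) k by move=> k; rewrite E.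
case: eta E Ek => [[[[i' j'] s'] /= hij'] | i'] _ Ek.
- case: b hb Ek => [[[[[i j] s] /= hij]|g]|r] //= _ Ek.
  + have hi : (i < n)%N by have := ltn_ord j; lia.
    case: (leqP i i') => hii.
    * move: (Ek (Ordinal hi)); clear Ek; rewrite !ffunE /= -!(inj_eq val_inj) /=.
      rewrite eqxx; case: s; case: s'; do ! (case: eqP => ? /=); lia.
    * move: (Ek i'); clear Ek; rewrite !ffunE /= -!(inj_eq val_inj) /=.
      rewrite eqxx; case: s; case: s'; do ! (case: eqP => ? /=); lia.
  + move: (Ek i'); clear Ek; rewrite !ffunE /= -!(inj_eq val_inj) /=.
    rewrite eqxx; case: s'; do ! (case: eqP => ? /=); lia.
- case: b hb Ek => [[[[[i j] s] /= hij]|g]|r] //= _ Ek.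
  + have hi : (i < n)%N by have := ltn_ord j; lia.
    case: (leqP i i') => hii.
    * move: (Ek (Ordinal hi)); clear Ek; rewrite !ffunE /= -!(inj_eq val_inj) /=.
      rewrite eqxx; case: s; do ! (case: eqP => ? /=); lia.
    * move: (Ek i'); clear Ek; rewrite !ffunE /= -!(inj_eq val_inj) /=.
      rewrite eqxx; case: s; do ! (case: eqP => ? /=); lia.
  + move: (Ek i'); clear Ek; rewrite !ffunE /= -!(inj_eq val_inj) /=.
    by rewrite eqxx.
Qed.

Definition fsupp (K : pzRingType) (y : LY n K) := forall b, ~~ isF b -> y b = 0.

Lemma fsupp_bracket (K : pzRingType) t (x : LY n K) : fsupp x -> fsupp (bracketY (fY K t) x).
Proof.
rewrite /fsupp => hx z hz; rewrite ffunE; apply: big1 => a _; apply: big1 => b _.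
case: a => [[a|a]|a]; rewrite ?ffunE ?mul0r //.
case: b => [[b|b]|b]; try by rewrite hx // mulr0 mul0r.
by rewrite structFF // mulr0z mulr0.
Qed.

Section Rep.
Variables (K : fieldType) (V : lmodType K) (rho : BY n -> {linear V -> V}) (vp : V).

Lemma LXv_add u w : LXv rho vp u -> LXv rho vp w -> LXv rho vp (u + w).
Proof. move=> hu hw W hW h0 hact; case: (hW) => _ hadd _; apply: hadd; [exact: hu| exact: hw]. Qed.
Lemma LXv_scale k u : LXv rho vp u -> LXv rho vp (k *: u).
Proof. move=> hu W hW h0 hact; case: (hW) => _ _ hs; apply: hs; exact: hu. Qed.
Lemma LXv_0 : LXv rho vp 0.
Proof. by move=> W [h0 _ _]. Qed.
Lemma LXv_act x w : LieX x -> LXv rho vp w -> LXv rho vp (act rho x w).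
Proof. move=> hx hw W hW h0 hact; apply: (hact) => //; exact: (hw W hW h0 hact). Qed.

Lemma act_fY g v : act rho (fY K (val g)) v = rho (inl (inr g)) v.
Proof.
rewrite /act (bigD1 (inl (inr g))) //= big1 ?addr0 ?ffunE ?eqxx ?scale1r //.
move=> [[h|h]|r] hb; rewrite ffunE ?scale0r //.
have : h != g by apply: contraNneq hb => ->.
by rewrite -(inj_eq val_inj) => /negbTE ->; rewrite scale0r.
Qed.

Lemma act_fsupp y w : (forall g, LXv rho vp (rho (inl (inr g)) w)) -> fsupp y ->
  LXv rho vp (act rho y w).
Proof.
move=> hw hy; rewrite /act; apply: (big_ind (LXv rho vp)).
- exact: LXv_0.
- exact: LXv_add.
move=> [[b|b]|b] _.
- by rewrite hy // scale0r; apply: LXv_0.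
- by apply: LXv_scale.
- by rewrite hy // scale0r; apply: LXv_0.
Qed.
End Rep.
End H.

Theorem lemma3p4 (K : closedFieldType) (n : nat) (hn : (2 <= n)%N)
  (V : vectType K) (rho : BY n -> {linear V -> V})
  (Hrep : is_rep rho) (Hres : restricted_rep rho) (Hirr : irreducible_rep rho)
  (a : 'I_n.+1 -> nat)
  (Hpres : forall p, p \in [pchar K] -> forall r, (a r < p)%N)
  (Han : a (inord n.-1) <> 0%N) (Han1 : a ord_max = 0%N)
  (vp : V) (Hvp0 : vp != 0)
  (Hvpe : forall g, rho (inl (inl g)) vp = 0)
  (Hvph : forall r, rho (inr r) vp = (a r)%:R *: vp)
  (Hf : forall g, LXv rho vp (rho (inl (inr g)) vp)) :
  forall (g : PRY n) (s : seq (LY n K)),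
    (1 <= size s)%N ->
    (forall x, x \in s -> exists eta : PRX n, rootvecX x eta) ->
    LXv rho vp (rho (inl (inr g)) (foldr (act rho) vp s)).
Proof.
move=> g s _; elim: s g => [|x s IH] g Hs /=; first exact: Hf.
have IH' : forall g', LXv rho vp (rho (inl (inr g')) (foldr (act rho) vp s)).
  by move=> g'; apply: IH => y hy; apply: Hs; rewrite in_cons hy orbT.
have [eta [HL _ Hw]] := Hs x (mem_head x s).
have Hx : fsupp x.
  move=> b hb; apply/eqP; apply: contraT => hne.
  by case: (wt_nonF hb (Hw b hne)).
set w := foldr (act rho) vp s in IH' *.
rewrite -act_fY.
rewrite -[act rho (fY K (val g)) (act rho x w)](subrK (act rho x (act rho (fY K (val g)) w))) -Hrep.
apply: LXv_add.
  by apply: act_fsupp => //; apply: fsupp_bracket.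
by apply: LXv_act => //; rewrite act_fY; apply: IH'.
Qed.
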